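(* Let $\mathcal C_1,\mathcal C_2$ be normal rational curves in $\mathrm{PG}(N,q)$ spanning disjoint subspaces, and let $\mathcal C_1^*,\mathcal C_2^*$ be their $\mathbb{F}_{q^n}$-extensions in $\mathrm{PG}(N,q^n)$. Let $P\in\mathcal C_1^*\setminus\mathcal C_1$ and $Q\in\mathcal C_2^*\setminus\mathcal C_2$, with $P$ not contained in the $\mathbb{F}_{q^2}$-extension of $\mathcal C_1$. Then there is at most one normal rational scroll $S^*$ of $\mathrm{PG}(N,q^n)$ defined by $\mathcal C_1^*,\mathcal C_2^*$ that contains the line $\langle P,Q\rangle$ and is the $\mathbb{F}_{q^n}$-extension of a normal rational scroll of $\mathrm{PG}(N,q)$ defined by $\mathcal C_1,\mathcal C_2$. Moreover, if such a scroll exists, it contains the lines $\langle P^{\sigma^i},Q^{\sigma^i}\rangle$ for every $i$.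
   Context: $\mathrm{PG}(N,q)$ is embedded in $\mathrm{PG}(N,q^n)$ as the set of points with coordinates in $\mathbb{F}_q$ (up to scalar), and $\sigma$ is the collineation of $\mathrm{PG}(N,q^n)$ raising all coordinates to the $q$-th power, so $\mathrm{PG}(N,q)$ is the set of $\sigma$-fixed points. A normal rational curve of degree $d$ ($1\le d\le q$) in $\mathrm{PG}(N,q)$ is the image of a map $\rho:\mathrm{PG}(1,q)\to\mathrm{PG}(N,q)$, $(s,t)_{\mathbb{F}_q}\mapsto(\sum_{i=0}^d s^{d-i}t^ie_i)_{\mathbb{F}_q}$, for linearly independent vectors $e_0,\dots,e_d$; its $\mathbb{F}_{q^j}$-extension ($j\mid n$) is the image of the same formula with $(s,t)$ ranging over $\mathbb{F}_{q^j}^2\setminus\{0\}$. Given normal rational curves $\mathcal C_1=\mathrm{Im}(\rho_1)$ and $\mathcal C_2=\mathrm{Im}(\rho_2)$ spanning disjoint subspaces, a normal rational scroll defined by $\mathcal C_1,\mathcal C_2$ is a set of lines $\{\langle\rho_1(X),\rho_2(\psi(X))\rangle:X\in\mathrm{PG}(1,q)\}$ for some $\psi\in\mathrm{PGL}(2,q)$ (this family does not depend on the choice of parametrisations $\rho_i$). Its $\mathbb{F}_{q^n}$-extension is $\{\langle\rho_1^*(X),\rho_2^*(\psi^*(X))\rangle:X\in\mathrm{PG}(1,q^n)\}$, where $\rho_i^*,\psi^*$ are the same formulas over $\mathbb{F}_{q^n}$; a normal rational scroll of $\mathrm{PG}(N,q^n)$ defined by $\mathcal C_1^*,\mathcal C_2^*$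 is defined analogously with $\psi\in\mathrm{PGL}(2,q^n)$. *)

(* Defs.v *)
From HB Require Import structures.
From mathcomp Require Import all_boot all_order all_algebra all_field.
Set Implicit Arguments. Unset Strict Implicit. Unset Printing Implicit Defensive.
Import GRing.Theory.
Local Open Scope ring_scope.

(* L plays the role of F_{q^n}; F_{q^j} inside L is the set
   of x with x ^+ (q^j) = x.  Points of PG(N, L) are nonzero row vectors of
   'rV_(N.+1), two vectors representing the same point iff they span the same
   row space.  A line <P,Q> is represented by the 2 x (N+1) matrix col_mx P Q,
   two lines being equal iff their row spaces are equal. *)

Section Defs.
Variable L : fieldType.

Definition mx_fixed (m : nat) (r c : nat) (A : 'M[L]_(r, c)) : Prop :=
  forall i j, A i j ^+ m = A i j.

(* Frobenius-type map on coordinates: x |-> x^m  (sigma^i is m = q^i) *)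
Definition frob_mx (m : nat) (r c : nat) (A : 'M[L]_(r, c)) : 'M[L]_(r, c) :=
  map_mx (fun x => x ^+ m) A.

Definition nrc_vec (d : nat) (X : 'rV[L]_2) : 'rV[L]_(d.+1) :=
  \row_(i < d.+1) ((X 0 0) ^+ (d - i)%N * (X 0 1) ^+ i).

Definition rho (d N : nat) (e : 'M[L]_(d.+1, N.+1)) (X : 'rV[L]_2) : 'rV[L]_(N.+1) :=
  nrc_vec d X *m e.

(* P lies on the F_{q^j}-extension of the curve Im(rho) (m = q^j):
   P = rho(X) (as projective points) for some (s,t) in F_{q^j}^2 \ {0}. *)
Definition on_curve (m d N : nat) (e : 'M[L]_(d.+1, N.+1)) (P : 'rV[L]_(N.+1)) : Prop :=
  exists X : 'rV[L]_2, X != 0 /\ mx_fixed m X /\ (P == rho e X)%MS.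

Definition scroll_line (m d1 d2 N : nat) (e1 : 'M[L]_(d1.+1, N.+1))
    (e2 : 'M[L]_(d2.+1, N.+1)) (psi : 'M[L]_2) (M : 'M[L]_(2, N.+1)) : Prop :=
  exists X : 'rV[L]_2, X != 0 /\ mx_fixed m X /\
    (M == col_mx (rho e1 X) (rho e2 (X *m psi)))%MS.

(* S (a set of lines of PG(N,L)) is the F_{mp}-extension of a normal rational
   scroll defined by the curves with parametrisations e1, e2, with
   psi in PGL(2, F_{mc})  (psi given by an invertible 2x2 matrix with
   entries in F_{mc}). *)
Definition nr_scroll (mc mp d1 d2 N : nat) (e1 : 'M[L]_(d1.+1, N.+1))
    (e2 : 'M[L]_(d2.+1, N.+1)) (S : 'M[L]_(2, N.+1) -> Prop) : Prop :=
  exists psi : 'M[L]_2, psi \in unitmx /\ mx_fixed mc psi /\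
    forall M, S M <-> scroll_line mp e1 e2 psi M.

End Defs.

(* Main.v *)
Require Import Defs.
From HB Require Import structures.
From mathcomp Require Import all_boot all_order all_algebra all_field.
From mathcomp Require Import ring.
From mathcomp Require Import fingroup pgroup.
Import GRing.Theory.
Local Open Scope ring_scope.
Set Implicit Arguments. Unset Strict Implicit. Unset Printing Implicit Defensive.

Lemma l10 : (lift ord0 ord0 : 'I_2) = 1. Proof. exact: val_inj. Qed.
Lemma det2 (F : comNzRingType) (A : 'M[F]_2) : \det A = A 0 0 * A 1 1 - A 0 1 * A 1 0.
Proof.
rewrite (expand_det_row _ 0) !big_ord_recl big_ord0 /cofactor !det_mx11 !mxE /=.
rewrite !l10 (_ : lift 1 0 = 0 :> 'I_2); last exact: val_inj.
rewrite /bump /= expr0 expr1. ring.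
Qed.
Lemma mulrow2 (F : comNzRingType) (X : 'rV[F]_2) (A : 'M[F]_2) j :
  (X *m A) 0 j = X 0 0 * A 0 j + X 0 1 * A 1 j.
Proof. by rewrite mxE !big_ord_recl big_ord0 addr0 /= l10. Qed.
Lemma row2_eq (F : Type) (X Y : 'rV[F]_2) : X 0 0 = Y 0 0 -> X 0 1 = Y 0 1 -> X = Y.
Proof.
move=> h0 h1; apply/matrixP => i j; rewrite (ord1 i).
case: j => [[|[|//]]] Hj.
  by rewrite (_ : Ordinal Hj = 0) //; apply: val_inj.
by rewrite (_ : Ordinal Hj = 1) //; apply: val_inj.
Qed.

Section Frob.
Variable L : fieldType.
Variable m : nat.
Hypothesis hm : [pchar L].-nat m.

Lemma m_gt0 : (0 < m)%N. Proof. by case/andP: hm. Qed.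
Lemma fD (x y : L) : (x + y) ^+ m = x ^+ m + y ^+ m. Proof. exact: exprDn_pchar. Qed.
Lemma fN (x : L) : (- x) ^+ m = - x ^+ m. Proof. exact: exprNn_pchar. Qed.
Lemma fB (x y : L) : (x - y) ^+ m = x ^+ m - y ^+ m. Proof. by rewrite fD fN. Qed.
Lemma f0 : (0 : L) ^+ m = 0. Proof. by rewrite expr0n eqn0Ngt m_gt0. Qed.

Lemma map_mxM_f a b c (A : 'M[L]_(a, b)) (B : 'M[L]_(b, c)) :
  frob_mx m (A *m B) = frob_mx m A *m frob_mx m B.
Proof.
apply/matrixP => i j; rewrite !mxE (big_morph (fun x : L => x ^+ m) fD f0).
by apply: eq_bigr => k _; rewrite !mxE exprMn.
Qed.

Lemma map_submx_f a b c (A : 'M[L]_(a, c)) (B : 'M[L]_(b, c)) :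
  (A <= B)%MS -> (frob_mx m A <= frob_mx m B)%MS.
Proof. by case/submxP => D ->; rewrite map_mxM_f submxMl. Qed.

Lemma map_eqmx_f a b c (A : 'M[L]_(a, c)) (B : 'M[L]_(b, c)) :
  (A == B)%MS -> (frob_mx m A == frob_mx m B)%MS.
Proof. by case/andP => h1 h2; apply/andP; split; apply: map_submx_f. Qed.
End Frob.

Lemma fixed_pow (L : fieldType) q i a b (A : 'M[L]_(a, b)) :
  mx_fixed q A -> mx_fixed (q ^ i) A.
Proof.
move=> h x y; elim: i => [|i IH]; first by rewrite expn0 expr1.
by rewrite expnS exprM h IH.
Qed.

Lemma frob_fixed (L : fieldType) m a b (A : 'M[L]_(a, b)) :
  mx_fixed m A -> frob_mx m A = A.
Proof. by move=> h; apply/matrixP => i j; rewrite mxE h. Qed.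

Lemma frob_neq0 (L : fieldType) m a b (A : 'M[L]_(a, b)) :
  A != 0 -> frob_mx m A != 0.
Proof.
apply: contra => /eqP h; apply/eqP/matrixP => i j.
have := congr1 (fun M : 'M[L]_(a,b) => M i j) h; rewrite !mxE => /eqP.
by rewrite expf_eq0 => /andP [_ /eqP].
Qed.

Section NRC.
Variable L : fieldType.

Lemma nrcE d (X : 'rV[L]_2) i : nrc_vec d X 0 i = X 0 0 ^+ (d - i) * X 0 1 ^+ i.
Proof. by rewrite mxE. Qed.

Lemma nrc_frob d m (X : 'rV[L]_2) : frob_mx m (nrc_vec d X) = nrc_vec d (frob_mx m X).
Proof. by apply/matrixP => i j; rewrite !mxE exprMn -!exprM; congr (_ * _); rewrite mulnC. Qed.

Lemma nrc_scale d c (X : 'rV[L]_2) : nrc_vec d (c *: X) = c ^+ d *: nrc_vec d X.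
Proof.
apply/matrixP => i j; rewrite !mxE !exprMn.
have hj : (j <= d)%N by rewrite -ltnS ltn_ord.
have -> : c ^+ d = c ^+ (d - j) * c ^+ j by rewrite -exprD subnK.
ring.
Qed.

Lemma nrc_neq0 d (X : 'rV[L]_2) : X != 0 -> nrc_vec d X != 0.
Proof.
apply: contra => /eqP h.
have h0 := congr1 (fun M : 'rV[L]_(d.+1) => M 0 ord0) h.
have h1 := congr1 (fun M : 'rV[L]_(d.+1) => M 0 ord_max) h.
move: h0 h1; rewrite !mxE /= subn0 subnn !expr0 mulr1 mul1r.
move=> /eqP; rewrite expf_eq0 => /andP [_ /eqP a0].
move=> /eqP; rewrite expf_eq0 => /andP [_ /eqP a1].
by apply/eqP; apply: row2_eq; rewrite mxE ?a0 ?a1.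
Qed.
End NRC.

Section NRC2.
Variable L : fieldType.

Lemma cross_sub (X X' : 'rV[L]_2) :
  X' != 0 -> X 0 0 * X' 0 1 = X 0 1 * X' 0 0 -> (X <= X')%MS.
Proof.
move=> nX' hc; apply/sub_rVP.
case: (eqVneq (X' 0 0) 0) => h.
  have h1 : X' 0 1 != 0.
    apply: contra nX' => /eqP h1; apply/eqP; apply: row2_eq; by rewrite mxE ?h ?h1.
  exists (X 0 1 / X' 0 1); apply: row2_eq; rewrite mxE.
    rewrite h mulr0 in hc; move/eqP: hc; rewrite mulf_eq0 (negbTE h1) orbF => /eqP ->.
    by rewrite h mulr0.
  by rewrite divfK.
exists (X 0 0 / X' 0 0); apply: row2_eq; rewrite mxE.
  by rewrite divfK.
by rewrite mulrAC hc mulfK.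
Qed.

Lemma nrc_inj k (X X' : 'rV[L]_2) :
  X != 0 -> X' != 0 -> (nrc_vec k.+1 X <= nrc_vec k.+1 X')%MS -> (X <= X')%MS.
Proof.
move=> nX nX' /sub_rVP [c hc].
suff cr : X 0 0 * X' 0 1 = X 0 1 * X' 0 0 by exact: cross_sub.
have cn0 : c != 0.
  apply/eqP => c0; move: (@nrc_neq0 L k.+1 X nX); by rewrite hc c0 scale0r eqxx.
have E i := congr1 (fun M : 'rV[L]_(k.+2) => M 0 i) hc.
have e0 := E ord0; have e1 := E (inord 1); have ed := E ord_max; have edm := E (inord k).
move: e0 e1 ed edm; rewrite !mxE /= ?inordK // ?subn0 ?subnn ?subSS ?subn0 ?subSn // ?subnn.
rewrite !expr0 !expr1 !mulr1 !mul1r.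
have hst : X 0 0 != 0 \/ X 0 1 != 0.
  case: (eqVneq (X 0 0) 0) => h0; last by left.
  right; apply: contra nX => /eqP h1; apply/eqP; apply: row2_eq; by rewrite mxE ?h0 ?h1.
set s := X 0 0; set t := X 0 1; set s' := X' 0 0; set t' := X' 0 1.
move=> e0 e1 ed edm; case: hst => hs.
  have : s ^+ k * (s * t' - t * s') = 0.
    rewrite (_ : s ^+ k * (s * t' - t * s') = s ^+ k.+1 * t' - (s ^+ k * t) * s').
      by rewrite e0 e1 exprS; ring.
    by rewrite exprS; ring.
  by move/eqP; rewrite mulf_eq0 expf_eq0 (negbTE hs) andbF /= subr_eq0 => /eqP ->; ring.
have : t ^+ k * (s * t' - t * s') = 0.
  rewrite (_ : t ^+ k * (s * t' - t * s') = (s * t ^+ k) * t' - t ^+ k.+1 * s').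
    by rewrite ed edm exprS; ring.
  by rewrite exprS; ring.
by move/eqP; rewrite mulf_eq0 expf_eq0 (negbTE hs) andbF /= subr_eq0 => /eqP ->; ring.
Qed.
End NRC2.

Section Rho.
Variable L : fieldType.

Lemma rho_neq0 d N (e : 'M[L]_(d.+1, N.+1)) X : row_free e -> X != 0 -> rho e X != 0.
Proof. by move=> fe nX; rewrite /rho mulmx_free_eq0 // nrc_neq0. Qed.

Lemma rho_scale d N (e : 'M[L]_(d.+1, N.+1)) c X : rho e (c *: X) = c ^+ d *: rho e X.
Proof. by rewrite /rho nrc_scale -scalemxAl. Qed.

Lemma rho_inj d N (e : 'M[L]_(d.+1, N.+1)) X X' : (0 < d)%N -> row_free e -> X != 0 -> X' != 0 ->
  (rho e X <= rho e X')%MS -> (X <= X')%MS.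
Proof.
case: d e => // k e _ fe nX nX'; rewrite /rho submxMfree //; exact: nrc_inj.
Qed.

Lemma rho_frob d N (e : 'M[L]_(d.+1, N.+1)) m X : [pchar L].-nat m -> mx_fixed m e ->
  frob_mx m (rho e X) = rho e (frob_mx m X).
Proof. by move=> hm fe; rewrite /rho map_mxM_f // nrc_frob (@frob_fixed _ m _ _ e fe). Qed.

Lemma col_scale a b n (A : 'M[L]_(a, n)) (B : 'M[L]_(b, n)) c :
  c != 0 -> (col_mx A (c *: B) == col_mx A B)%MS.
Proof.
move=> nc; apply/andP; split; rewrite col_mx_sub -addsmxE addsmxSl /=.
  by rewrite (eqmx_scale B nc) -addsmxE addsmxSr.
by rewrite -addsmxE; apply: submx_trans (addsmxSr A (c *: B)); rewrite (eqmx_scale B nc).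
Qed.

Lemma split_line n a b c dd d1 d2 (A : 'M[L]_(a, n)) (B : 'M[L]_(b, n))
    (C : 'M[L]_(c, n)) (D : 'M[L]_(dd, n)) (E1 : 'M[L]_(d1, n)) (E2 : 'M[L]_(d2, n)) :
  \rank (E1 :&: E2)%MS = 0%N -> (A <= E1)%MS -> (C <= E1)%MS -> (D <= E2)%MS ->
  (col_mx A B <= col_mx C D)%MS -> (A <= C)%MS.
Proof.
move=> h0 sA sC sD sL.
have s1 : (A <= (C + D) :&: E1)%MS.
  rewrite sub_capmx sA andbT addsmxE.
  by apply: submx_trans sL; rewrite -addsmxE addsmxSl.
rewrite -(matrix_modl D sC) in s1.
apply: (submx_trans s1); rewrite addsmx_sub submx_refl /=.
have hz : (D :&: E1 <= E1 :&: E2)%MS by rewrite capmxC capmxS.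
move/eqP: h0; rewrite mxrank_eq0 => /eqP h0; rewrite h0 in hz.
exact: submx_trans hz (sub0mx _ _).
Qed.
End Rho.

Section Key.
Variable L : fieldType.

Lemma split_line2 n a b c dd d1 d2 (A : 'M[L]_(a, n)) (B : 'M[L]_(b, n))
    (C : 'M[L]_(c, n)) (D : 'M[L]_(dd, n)) (E1 : 'M[L]_(d1, n)) (E2 : 'M[L]_(d2, n)) :
  \rank (E1 :&: E2)%MS = 0%N -> (B <= E2)%MS -> (C <= E1)%MS -> (D <= E2)%MS ->
  (col_mx A B <= col_mx C D)%MS -> (B <= D)%MS.
Proof.
move=> h0 sB sC sD sL.
have s1 : (B <= (D + C) :&: E2)%MS.
  rewrite sub_capmx sB andbT addsmxC addsmxE.
  by apply: submx_trans sL; rewrite -addsmxE addsmxSr.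
rewrite -(matrix_modl C sD) in s1.
apply: (submx_trans s1); rewrite addsmx_sub submx_refl /=.
have hz : (C :&: E2 <= E1 :&: E2)%MS by rewrite capmxS.
move/eqP: h0; rewrite mxrank_eq0 => /eqP h0; rewrite h0 in hz.
exact: submx_trans hz (sub0mx _ _).
Qed.

Lemma root_fix q (al be ga t : L) : [pchar L].-nat q -> al != 0 ->
  al ^+ q = al -> be ^+ q = be -> ga ^+ q = ga ->
  al * t ^+ 2 + be * t + ga = 0 -> t ^+ (q ^ 2) = t.
Proof.
move=> hq nal hal hbe hga h.
have hu : al * (t ^+ q) ^+ 2 + be * t ^+ q + ga = 0.
  have := congr1 (fun x => x ^+ q) h.
  by rewrite (@f0 _ _ hq) !(@fD _ _ hq) !exprMn hal hbe hga.
have : (t ^+ q - t) * (al * (t ^+ q + t) + be) = 0.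
  have -> : (t ^+ q - t) * (al * (t ^+ q + t) + be) = (al * (t ^+ q) ^+ 2 + be * t ^+ q + ga) - (al * t ^+ 2 + be * t + ga) by ring.
  by rewrite hu h subr0.
rewrite -mulnn exprM; move/eqP; rewrite mulf_eq0 => /orP [/eqP H|/eqP H].
  have ut : t ^+ q = t by apply/eqP; rewrite -subr_eq0 H.
  by rewrite !ut.
have H' := congr1 (fun x => x ^+ q) H.
move: H'; rewrite (@f0 _ _ hq) !(@fD _ _ hq) !exprMn (@fD _ _ hq) hal hbe => H'.
have : al * ((t ^+ q) ^+ q - t) = 0.
  have -> : al * ((t ^+ q) ^+ q - t) = (al * ((t ^+ q) ^+ q + t ^+ q) + be) - (al * (t ^+ q + t) + be) by ring.
  by rewrite H H' subr0.
move/eqP; rewrite mulf_eq0 (negbTE nal) /= subr_eq0 => /eqP //.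
Qed.
End Key.

Section Key2.
Variable L : fieldType.

Definition mkrow2 (u v : L) : 'rV[L]_2 := \row_(j < 2) (if j == 0 then u else v).
Lemma mkrow2_0 u v : mkrow2 u v 0 0 = u. Proof. by rewrite mxE. Qed.
Lemma mkrow2_1 u v : mkrow2 u v 0 1 = v. Proof. by rewrite mxE. Qed.
Lemma mkrow2_fixed m u v : u ^+ m = u -> v ^+ m = v -> mx_fixed m (mkrow2 u v).
Proof. by move=> hu hv i j; rewrite mxE; case: ifP. Qed.
Lemma mkrow2_neq0 u v : v != 0 -> mkrow2 u v != 0.
Proof.
move=> nv; apply: contra nv => /eqP h.
by have := congr1 (fun M : 'rV[L]_2 => M 0 1) h; rewrite mkrow2_1 mxE => ->.
Qed.
Lemma mkrow2_neq0' u v : u != 0 -> mkrow2 u v != 0.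
Proof.
move=> nv; apply: contra nv => /eqP h.
by have := congr1 (fun M : 'rV[L]_2 => M 0 0) h; rewrite mkrow2_0 mxE => ->.
Qed.

Lemma mx22_eq (A B : 'M[L]_2) : A 0 0 = B 0 0 -> A 0 1 = B 0 1 -> A 1 0 = B 1 0 ->
  A 1 1 = B 1 1 -> A = B.
Proof.
move=> h00 h01 h10 h11; apply/matrixP => i j.
have E (k : 'I_2) : k = 0 \/ k = 1.
  by case: k => [[|[|//]]] H; [left|right]; apply: val_inj.
by case: (E i) => ->; case: (E j) => ->.
Qed.

End Key2.

Lemma charnat (L : finFieldType) q n : #|L| = (q ^ n)%N -> (0 < n)%N -> [pchar L].-nat q.
Proof.
move=> HL n0.
have [p pp cp] := finPcharP L.
have := pprimeChar_pgroup cp.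
rewrite /pgroup cardsT /= HL => H.
rewrite (eq_pnat _ (pcharf_eq cp)).
by move: H; rewrite pnatX -[(n == 0)%N]negbK -lt0n n0 orbF.
Qed.

Section Key2.
Variable L : fieldType.
Lemma scaleE a b c (A : 'M[L]_(a, b)) i j : (c *: A) i j = c * A i j.
Proof. by rewrite mxE. Qed.

Lemma key q (psi psi' : 'M[L]_2) (X : 'rV[L]_2) c :
  [pchar L].-nat q -> psi \in unitmx -> mx_fixed q psi -> mx_fixed q psi' -> X != 0 ->
  X *m psi' = c *: (X *m psi) ->
  (forall Z : 'rV[L]_2, Z != 0 -> mx_fixed (q ^ 2) Z -> ~~ (X <= Z)%MS) ->
  exists k, psi' = k *: psi.
Proof.
move=> hq upsi fpsi fpsi' nX hX hZ.
have u0 := congr1 (fun M : 'rV[L]_2 => M 0 0) hX.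
have u1 := congr1 (fun M : 'rV[L]_2 => M 0 1) hX.
move: u0 u1; rewrite /= !scaleE !mulrow2.
move: upsi; rewrite unitmxE unitfE det2 => nD.
have fa := fpsi 0 0; have fb := fpsi 0 1; have fc := fpsi 1 0; have fd := fpsi 1 1.
have fa' := fpsi' 0 0; have fb' := fpsi' 0 1; have fc' := fpsi' 1 0; have fd' := fpsi' 1 1.
have nX2 : X 0 0 != 0 \/ X 0 1 != 0.
  case: (eqVneq (X 0 0) 0) => h0; last by left.
  right; apply: contra nX => /eqP h1; apply/eqP; apply: row2_eq; by rewrite mxE ?h0 ?h1.
have hXZ : forall u v, u ^+ (q ^ 2) = u -> v ^+ (q ^ 2) = v ->
    (u != 0 \/ v != 0) -> X 0 0 * v = X 0 1 * u -> False.
  move=> u v hu hv nuv cr.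
  have nZ : @mkrow2 L u v != 0 by case: nuv => h; [apply: mkrow2_neq0' | apply: mkrow2_neq0].
  move/negP: (hZ _ nZ (@mkrow2_fixed _ _ _ _ hu hv)); apply.
  by apply: cross_sub nZ _; rewrite mkrow2_0 mkrow2_1.
have q2 : (0 < q ^ 2)%N by rewrite expn_gt0 (@m_gt0 _ _ hq).
move=> e0 e1.
pose al := psi' 0 0 * psi 0 1 - psi' 0 1 * psi 0 0.
pose be := psi' 0 0 * psi 1 1 + psi' 1 0 * psi 0 1 - psi' 0 1 * psi 1 0 - psi' 1 1 * psi 0 0.
pose ga := psi' 1 0 * psi 1 1 - psi' 1 1 * psi 1 0.
have hQ : al * X 0 0 ^+ 2 + be * X 0 0 * X 0 1 + ga * X 0 1 ^+ 2 = 0.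
  have -> : al * X 0 0 ^+ 2 + be * X 0 0 * X 0 1 + ga * X 0 1 ^+ 2 =
    (X 0 0 * psi' 0 0 + X 0 1 * psi' 1 0) * (X 0 0 * psi 0 1 + X 0 1 * psi 1 1)
    - (X 0 0 * psi' 0 1 + X 0 1 * psi' 1 1) * (X 0 0 * psi 0 0 + X 0 1 * psi 1 0).
    by rewrite /al /be /ga; ring.
  by rewrite e0 e1; ring.
have fal : al ^+ q = al by rewrite /al (@fB _ _ hq) !exprMn fa' fb fb' fa.
have fga : ga ^+ q = ga by rewrite /ga (@fB _ _ hq) !exprMn fc' fd fd' fc.
have fbe : be ^+ q = be.
  by rewrite /be !(@fB _ _ hq) (@fD _ _ hq) !exprMn fa' fd fc' fb fb' fc fd' fa.
have f0q : (0 : L) ^+ (q ^ 2) = 0 by rewrite expr0n eqn0Ngt q2.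
case: (eqVneq al 0) => hal; last first.
  have hx1 : X 0 1 != 0.
    apply/eqP => h1; move: hQ; rewrite h1 expr0n /= !mulr0 !addr0 => /eqP.
    rewrite mulf_eq0 (negbTE hal) /= expf_eq0 /= => h0.
    by case: nX2; rewrite ?h1 ?h0 ?eqxx.
  pose t := X 0 0 / X 0 1.
  have ht : al * t ^+ 2 + be * t + ga = 0.
    have : (al * t ^+ 2 + be * t + ga) * X 0 1 ^+ 2 = 0.
      by rewrite -hQ /t; field.
    by move/eqP; rewrite mulf_eq0 expf_eq0 (negbTE hx1) andbF orbF => /eqP.
  have tq := @root_fix _ _ _ _ _ _ hq hal fal fbe fga ht.
  exfalso; apply: (hXZ t 1 tq (expr1n _ _)); first by right; exact: oner_neq0.
  by rewrite /t mulr1 mulrC divfK.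
case: (eqVneq ga 0) => hga; last first.
  have hx0 : X 0 0 != 0.
    apply/eqP => h1; move: hQ; rewrite h1 expr0n /= !mulr0 !mul0r !add0r => /eqP.
    rewrite mulf_eq0 (negbTE hga) /= expf_eq0 /= => h0.
    by case: nX2; rewrite ?h1 ?h0 ?eqxx.
  pose t := X 0 1 / X 0 0.
  have ht : ga * t ^+ 2 + be * t + al = 0.
    have : (ga * t ^+ 2 + be * t + al) * X 0 0 ^+ 2 = 0.
      by rewrite -hQ /t; field.
    by move/eqP; rewrite mulf_eq0 expf_eq0 (negbTE hx0) andbF orbF => /eqP.
  have tq := @root_fix _ _ _ _ _ _ hq hga fga fbe fal ht.
  exfalso; apply: (hXZ 1 t (expr1n _ _) tq); first by left; exact: oner_neq0.
  by rewrite /t mulr1 mulrC divfK.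
case: (eqVneq be 0) => hbe; last first.
  move: hQ; rewrite hal hga !mul0r addr0 add0r -mulrA => /eqP.
  rewrite mulf_eq0 (negbTE hbe) /= mulf_eq0 => /orP [] /eqP h.
    exfalso; apply: (hXZ 0 1 f0q (expr1n _ _)); first by right; exact: oner_neq0.
    by rewrite h mul0r mulr0.
  exfalso; apply: (hXZ 1 0 (expr1n _ _) f0q); first by left; exact: oner_neq0.
  by rewrite h mul0r mulr0.
exists ((psi' 0 0 * psi 1 1 - psi' 0 1 * psi 1 0) / (psi 0 0 * psi 1 1 - psi 0 1 * psi 1 0)).
apply: mx22_eq; rewrite scaleE mulrAC; apply: (canRL (mulfK nD)); apply/eqP; rewrite -subr_eq0; apply/eqP.
- by transitivity (- psi 1 0 * al); [rewrite /al; ring | rewrite hal mulr0].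
- by transitivity (- psi 1 1 * al); [rewrite /al; ring | rewrite hal mulr0].
- by transitivity (psi 0 0 * ga - psi 1 0 * be); [rewrite /ga /be; ring | rewrite hga hbe !mulr0 subr0].
- by transitivity (psi 0 1 * ga - psi 1 1 * be); [rewrite /ga /be; ring | rewrite hga hbe !mulr0 subr0].
Qed.
End Key2.


Lemma eqmxb_trans (L : fieldType) a b c n (A : 'M[L]_(a, n)) (B : 'M[L]_(b, n)) (C : 'M[L]_(c, n)) :
  (A == B)%MS -> (B == C)%MS -> (A == C)%MS.
Proof. by move=> /eqmxP h1 /eqmxP h2; apply/eqmxP; exact: eqmx_trans h1 h2. Qed.

Lemma eqmxb_sym (L : fieldType) a b n (A : 'M[L]_(a, n)) (B : 'M[L]_(b, n)) :
  (A == B)%MS -> (B == A)%MS.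
Proof. by move=> /eqmxP h1; apply/eqmxP; exact: eqmx_sym. Qed.

Lemma frob_col (L : fieldType) m a b n (A : 'M[L]_(a, n)) (B : 'M[L]_(b, n)) :
  frob_mx m (col_mx A B) = col_mx (frob_mx m A) (frob_mx m B).
Proof. exact: map_col_mx. Qed.

Lemma scroll_scale (L : fieldType) m d1 d2 N (e1 : 'M[L]_(d1.+1, N.+1))
    (e2 : 'M[L]_(d2.+1, N.+1)) psi k M : k != 0 ->
  scroll_line m e1 e2 (k *: psi) M -> scroll_line m e1 e2 psi M.
Proof.
move=> nk [Y [nY [fY hY]]]; exists Y; split=> //; split=> //.
apply: (eqmxb_trans hY).
rewrite -scalemxAr rho_scale; apply: col_scale.
by rewrite expf_eq0 negb_and nk orbT.
Qed.

Lemma scroll_scale' (L : fieldType) m d1 d2 N (e1 : 'M[L]_(d1.+1, N.+1))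
    (e2 : 'M[L]_(d2.+1, N.+1)) psi k M : k != 0 ->
  scroll_line m e1 e2 psi M -> scroll_line m e1 e2 (k *: psi) M.
Proof.
move=> nk [Y [nY [fY hY]]]; exists Y; split=> //; split=> //.
apply: (eqmxb_trans hY); apply: eqmxb_sym.
rewrite -scalemxAr rho_scale; apply: col_scale.
by rewrite expf_eq0 negb_and nk orbT.
Qed.


Theorem lemma3p4 (L : finFieldType) (q n N d1 d2 : nat)
    (e1 : 'M[L]_(d1.+1, N.+1)) (e2 : 'M[L]_(d2.+1, N.+1))
    (P Q : 'rV[L]_(N.+1)) :
  #|L| = (q ^ n)%N -> (0 < n)%N ->
  (1 <= d1 <= q)%N -> (1 <= d2 <= q)%N ->
  (* C1, C2 normal rational curves of PG(N,q) *)
  mx_fixed q e1 -> mx_fixed q e2 -> row_free e1 -> row_free e2 ->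
  (* spanning disjoint subspaces *)
  \rank (e1 :&: e2)%MS = 0%N ->
  (* P in C1* \ C1, not in the F_{q^2}-extension of C1 *)
  on_curve (q ^ n) e1 P -> ~ on_curve q e1 P -> ~ on_curve (q ^ 2) e1 P ->
  (* Q in C2* \ C2 *)
  on_curve (q ^ n) e2 Q -> ~ on_curve q e2 Q ->
  (forall S S' : 'M[L]_(2, N.+1) -> Prop,
      nr_scroll (q ^ n) (q ^ n) e1 e2 S -> nr_scroll q (q ^ n) e1 e2 S ->
      S (col_mx P Q) ->
      nr_scroll (q ^ n) (q ^ n) e1 e2 S' -> nr_scroll q (q ^ n) e1 e2 S' ->
      S' (col_mx P Q) ->
      forall M, S M <-> S' M)
  /\
  (forall S : 'M[L]_(2, N.+1) -> Prop,
      nr_scroll (q ^ n) (q ^ n) e1 e2 S -> nr_scroll q (q ^ n) e1 e2 S ->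
      S (col_mx P Q) ->
      forall i : nat, S (col_mx (frob_mx (q ^ i) P) (frob_mx (q ^ i) Q))).
Proof.
move=> hL n0 /andP [hd1 _] /andP [hd2 _] fe1 fe2 rf1 rf2 hdisj
  [Y [nY [_ hP]]] _ nPq2 [Y2 [nY2 [_ hQ]]] _.
have hq : [pchar L].-nat q by exact: charnat hL n0.
have fall : forall a b (A : 'M[L]_(a, b)), mx_fixed (q ^ n) A.
  by move=> a b A i j; rewrite -hL expf_card.
have sP : (P <= e1)%MS by case/andP: hP => h _; apply: submx_trans h (submxMl _ _).
have sQ : (Q <= e2)%MS by case/andP: hQ => h _; apply: submx_trans h (submxMl _ _).
have sr1 : forall X, (rho e1 X <= e1)%MS by move=> X; exact: submxMl.
have sr2 : forall X, (rho e2 X <= e2)%MS by move=> X; exact: submxMl.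
split; last first.
  move=> S _ [psi [upsi [fpsi hS]]] /hS [X [nX [_ hX]]] i.
  apply/hS; exists (frob_mx (q ^ i) X); split; first exact: frob_neq0.
  split; first exact: fall.
  have hqi : [pchar L].-nat (q ^ i)%N by rewrite pnatX hq.
  have := map_eqmx_f hqi hX.
  have fi1 := fixed_pow i fe1; have fi2 := fixed_pow i fe2.
  rewrite (frob_col _ P Q) frob_col !rho_frob //. have ee := map_mxM_f hqi X psi. move=> h. rewrite ee in h.
  by rewrite (frob_fixed (fixed_pow i fpsi)) in h.
move=> S1 S2 _ [psi [upsi [fpsi hS]]] HS1 _ [psi' [upsi' [fpsi' hS']]] HS2 M.
move/hS: HS1 => [X [nX [_ hX]]]; move/hS': HS2 => [X' [nX' [_ hX']]].
have c1 : (col_mx (rho e1 X') (rho e2 (X' *m psi')) <= col_mx (rho e1 X) (rho e2 (X *m psi)))%MS.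
  case/andP: hX => h1 _; case/andP: hX' => _ h2'; exact: submx_trans h2' h1.
have c2 : (col_mx (rho e1 X) (rho e2 (X *m psi)) <= col_mx (rho e1 X') (rho e2 (X' *m psi')))%MS.
  case/andP: hX => _ h2; case/andP: hX' => h1' _; exact: submx_trans h2 h1'.
have a1 : (rho e1 X' <= rho e1 X)%MS by apply: split_line hdisj (sr1 _) (sr1 _) (sr2 _) c1.
have /sub_rVP [k hk] := rho_inj hd1 rf1 nX' nX a1.
have nk : k != 0 by apply: contra nX' => /eqP k0; rewrite hk k0 scale0r.
have uX : forall (Z : 'rV[L]_2) (A : 'M[L]_2), Z != 0 -> A \in unitmx -> Z *m A != 0.
  move=> Z A nZ uA; apply: contra nZ => /eqP h.
  by rewrite -(mulmxK uA Z) h mul0mx.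
have a2 : (rho e2 (X *m psi) <= rho e2 (X *m psi'))%MS.
  have := split_line2 hdisj (sr2 _) (sr1 _) (sr2 _) c2.
  rewrite hk -scalemxAl rho_scale eqmx_scale //.
  by rewrite expf_eq0 negb_and nk orbT.
have /sub_rVP [c hc] := rho_inj hd2 rf2 (uX _ _ nX upsi) (uX _ _ nX upsi') a2.
have hPX : (P == rho e1 X)%MS.
  apply/andP; split.
    by case/andP: hX => h1 _; apply: split_line hdisj sP (sr1 _) (sr2 _) h1.
  by case/andP: hX => _ h2; apply: split_line hdisj (sr1 _) sP sQ h2.
have hZ : forall Z : 'rV[L]_2, Z != 0 -> mx_fixed (q ^ 2) Z -> ~~ (X <= Z)%MS.
  move=> Z nZ fZ; apply/negP => /sub_rVP [mu hmu].
  have nmu : mu != 0 by apply: contra nX => /eqP m0; rewrite hmu m0 scale0r.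
  apply: nPq2; exists Z; split=> //; split=> //.
  apply: (eqmxb_trans hPX); rewrite hmu rho_scale; apply/eqmxP; apply: eqmx_scale.
  by rewrite expf_eq0 negb_and nmu orbT.
have [k' hk'] := key hq upsi' fpsi' fpsi nX hc hZ.
have nk' : k' != 0.
  apply/eqP => k0; move: upsi; rewrite hk' k0 scale0r unitmxE det0 unitr0 //.
split => h.
  by apply/hS'; apply: (scroll_scale nk'); rewrite -hk'; apply/hS.
by apply/hS; rewrite hk'; apply: (scroll_scale' nk'); apply/hS'.
Qed.
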